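(* Let $\{a(n)\}_{n\in\mathbb{N}}$ be a sequence of non-negative numbers with $\sum_{n=1}^{\infty}a(n)\le 1$, and for $n\in\mathbb{N}$ let $B_n:=\{n,2n,\ldots,n^2\}$. Then for every $\varepsilon>0$ there exist infinitely many $n\in\mathbb{N}$ such that $\sum_{\lambda,\mu\in B_n,\ \mu<\lambda}a(\lambda-\mu)<\varepsilon$. *)

(* Defs.v *)
From mathcomp Require Import all_boot all_order all_algebra.
From mathcomp Require Import all_classical all_reals.
Set Implicit Arguments. Unset Strict Implicit. Unset Printing Implicit Defensive.
Import Order.TTheory GRing.Theory Num.Theory.
Local Open Scope ring_scope.

Definition B (n : nat) : seq nat := [seq (k * n)%N | k <- iota 1 n].

Definition Bsum (R : realType) (a : nat -> R) (n : nat) : R :=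
  \sum_(l <- B n) \sum_(m <- B n | (m < l)%N) a (l - m)%N.

(* Main.v *)
Require Import Defs.
From mathcomp Require Import all_boot all_order all_algebra.
From mathcomp Require Import all_classical all_reals.
From mathcomp Require Import zify ring lra.
Import Order.TTheory GRing.Theory Num.Theory.

Definition smooth (N n : nat) := all (fun p => p < N) (primes n).

Lemma pow_sq s : 4 <= s -> s * s <= 2 ^ s.
Proof.
elim: s => // s IH; rewrite leq_eqVlt => /orP [/eqP <- //|Hs].
have := IH Hs; rewrite expnS; nia.
Qed.

Lemma exists_t N : exists t, (t.+1 ^ N) * 2 < 2 ^ t.
Proof.
pose s := N + 4.
have Hs := @pow_sq s (leq_addl N 4).
have H2 : 0 < 2 ^ s by rewrite expn_gt0.
exists (2 ^ s).-1; rewrite prednK // -expnM -expnSr ltn_exp2l //.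
rewrite /s in Hs *; nia.
Qed.

Lemma logn_le p n t : 0 < n -> n <= 2 ^ t -> logn p n <= t.
Proof.
move=> n0 nX.
case: (posnP (logn p n)) => [->//|lp].
have pp : prime p by move: lp; rewrite logn_gt0 mem_primes => /andP[].
rewrite -(leq_exp2l _ _ (isT : 1 < 2)).
apply: leq_trans nX.
apply: (@leq_trans (p ^ logn p n)); first by rewrite leq_exp2r // prime_gt1.
exact: dvdn_leq (pfactor_dvdnn p n).
Qed.

Lemma count_smooth N t :
  \sum_(1 <= n < (2 ^ t).+1 | smooth N n) 1 <= t.+1 ^ N.
Proof.
have E : \sum_(1 <= n < (2 ^ t).+1 | smooth N n) 1
       = \sum_(0 <= n < (2 ^ t).+1 | (0 < n) && smooth N n) 1.
  rewrite [RHS]big_ltn_cond //= [LHS]big_mkcond [RHS]big_mkcond.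
  by apply: eq_big_nat => i /andP[i1 _]; rewrite i1.
rewrite E big_mkord sum1_card.
pose f (i : 'I_(2 ^ t).+1) := [ffun j : 'I_N => (inord (logn j i) : 'I_t.+1)].
apply: leq_trans (_ : _ <= #|{ffun 'I_N -> 'I_t.+1}|) _; last by rewrite card_ffun !card_ord.
apply: (leq_card_in f) => i j; rewrite !unfold_in /= => /andP[i0 si] /andP[j0 sj] /ffunP fij.
apply: val_inj => /=; apply: eqn_from_log => // p.
have lo (k : 'I_(2 ^ t).+1) : 0 < k -> logn p k <= t.
  by move=> k0; apply: logn_le => //; rewrite -ltnS.
case: (ltnP p N) => [pN|pN].
  have := fij (Ordinal pN); rewrite !ffunE => /(congr1 val) /=.
  by rewrite !inordK // ltnS; [apply: lo | apply: lo].
have z (k : 'I_(2 ^ t).+1) : smooth N k -> logn p k = 0.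
  move=> sk; apply/eqP; rewrite -leqn0 leqNgt logn_gt0; apply/negP => pk.
  by move/allP: sk => /(_ _ pk); rewrite ltnNge pN.
by rewrite !z.
Qed.

Lemma count_mult p X : 0 < p -> \sum_(1 <= n < X.+1) (p %| n) = X %/ p.
Proof.
move=> p0; elim: X => [|X IH]; first by rewrite big_geq ?div0n.
by rewrite big_nat_recr //= IH divnS // addnC.
Qed.

Lemma nonsmooth n N X : 0 < n -> n <= X -> ~~ smooth N n ->
  1 <= \sum_(N <= p < X.+1 | prime p) (p %| n).
Proof.
move=> n0 nX /allPn [p pn]; rewrite -leqNgt => Np.
move: pn; rewrite mem_primes => /and3P[pp _ pdn].
have pX : p <= X by apply: leq_trans nX; apply: dvdn_leq.
rewrite big_mkcond (bigD1_seq p) //=; last exact: iota_uniq.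
  by rewrite pp pdn.
by rewrite mem_index_iota Np ltnS.
Qed.

Lemma erdos_nat N t :
  2 ^ t <= t.+1 ^ N + \sum_(N <= p < (2 ^ t).+1 | prime p) (2 ^ t %/ p).
Proof.
set X := 2 ^ t.
have E : X = \sum_(1 <= n < X.+1) 1 by rewrite sum_nat_const_nat subSS subn0 muln1.
rewrite {1}E.
rewrite (bigID (smooth N)) /=; apply: leq_add; first exact: count_smooth.
apply: (@leq_trans (\sum_(1 <= n < X.+1) \sum_(N <= p < X.+1 | prime p) (p %| n))).
  rewrite [X in _ <= X](bigID (smooth N)) /=; apply: leq_trans (leq_addl _ _).
  rewrite big_nat_cond [X in _ <= X]big_nat_cond; apply: leq_sum => n /andP[/andP[n1 nX] sn].
  by apply: nonsmooth => //; rewrite -ltnS.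
rewrite exchange_big /=; apply: leq_sum => p pp.
by rewrite count_mult // prime_gt0.
Qed.

Local Open Scope ring_scope.

Lemma erdos (R : realFieldType) N :
  exists M, (1/2 : R) <= \sum_(N <= p < M | prime p) (p%:R)^-1.
Proof.
have [t Ht] := exists_t N.
set X := (2 ^ t)%N in Ht *.
exists X.+1.
have H := erdos_nat N t; rewrite -/X in H.
have X0 : (0 : R) < X%:R by rewrite ltr0n /X expn_gt0.
set S := \sum_(N <= p < X.+1 | prime p) (p%:R : R)^-1.
set A := ((t.+1 ^ N)%N%:R : R).
have H1 : (X%:R : R) <= A + X%:R * S.
  apply: le_trans (_ : _ <= ((t.+1 ^ N + \sum_(N <= p < X.+1 | prime p) (X %/ p))%N)%:R) _.
    by rewrite ler_nat.
  rewrite natrD lerD2l natr_sum /S mulr_sumr; apply: ler_sum => p pp.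
  have p0 : (0 : R) < p%:R by rewrite ltr0n prime_gt0.
  rewrite ler_pdivlMr // -natrM ler_nat; exact: leq_trunc_div.
have H2 : A * 2 < X%:R.
  by rewrite /A -(natrM R _ 2) ltr_nat.
rewrite -(ler_pM2l X0).
move: H1 H2; clear; set Y := (X%:R : R); set Z := Y * S; move=> H1 H2.
have -> : Y * (1 / 2) = Y / 2 by rewrite mul1r.
clearbody Z; lra.
Qed.

Lemma erdos_iter (R : realFieldType) N K :
  exists M, (N <= M)%N /\ (K%:R / 2 : R) <= \sum_(N <= p < M | prime p) (p%:R)^-1.
Proof.
elim: K => [|K [M1 [NM1 IH]]].
  exists N; split; first exact: leqnn.
  rewrite big_geq; last exact: leqnn.
  by rewrite mulr0n mul0r lexx.
have [M2 H2] := erdos R M1.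
have M12 : (M1 <= M2)%N.
  rewrite leqNgt; apply/negP => lt; move: H2; rewrite big_geq; last exact: ltnW.
  rewrite ler_pdivrMr; last by rewrite ltr0n.
  by rewrite mul0r ler10.
exists M2; split; first exact: leq_trans M12.
rewrite (big_cat_nat NM1 M12) /= -natr1 mulrDl.
move: IH H2; set u := \sum_(N <= i < M1 | prime i) _; set v := \sum_(M1 <= i < M2 | prime i) _.
move=> IH H2; clearbody u v; lra.
Qed.

Lemma le_sum_sub (R : realDomainType) (T : eqType) (s t : seq T) (F : T -> R) :
  uniq s -> uniq t -> {subset s <= t} -> (forall x, x \in t -> 0 <= F x) ->
  \sum_(x <- s) F x <= \sum_(x <- t) F x.
Proof.
move=> us ut st F0.
rewrite [X in _ <= X](bigID (mem s)) /= -[\sum_(i <- t | i \in s) F i]big_filter.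
have pe : perm_eq [seq x <- t | x \in s] s.
  apply: uniq_perm; first exact: filter_uniq.
    exact: us.
  move=> x; rewrite mem_filter; apply/andP/idP => [[]|xs] //.
  by split=> //; apply: st.
rewrite (perm_big _ pe) lerDl big_seq_cond; apply: sumr_ge0 => x /andP[xt _].
exact: F0.
Qed.

Lemma prime_rep p1 p2 d1 d2 : prime p1 -> prime p2 ->
  (0 < d1 < p1)%N -> (0 < d2 < p2)%N -> (d1 * p1 = d2 * p2)%N -> p1 = p2 /\ d1 = d2.
Proof.
move=> pp1 pp2 /andP[d10 d1p] /andP[d20 d2p] E.
have key q1 q2 e1 e2 : prime q1 -> prime q2 -> (0 < e2)%N -> (e2 < q2)%N ->
    (e1 * q1 = e2 * q2)%N -> q1 = q2 \/ (q1 < q2)%N.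
  move=> pq1 pq2 e20 e2q Eq.
  have : (q1 %| e2 * q2)%N by rewrite -Eq dvdn_mull.
  rewrite Euclid_dvdM // => /orP[h|h].
    by right; exact: leq_ltn_trans (dvdn_leq e20 h) e2q.
  by left; apply/eqP; rewrite -dvdn_prime2.
have pe : p1 = p2.
  case: (key _ _ _ _ pp1 pp2 d20 d2p E) => // lt1.
  case: (key _ _ _ _ pp2 pp1 d10 d1p (esym E)) => [e|lt2]; first by [].
  by move: (ltn_trans lt1 lt2); rewrite ltnn.
split=> //; move: E; rewrite pe => /eqP; rewrite eqn_mul2r => /orP[/eqP p0|/eqP //].
by move: pp2; rewrite p0.
Qed.

Definition Sp {R : realType} (a : nat -> R) (p : nat) : R :=
  \sum_(d <- iota 1 p.-1) a (d * p)%N.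

Lemma sum_Sp (R : realType) (a : nat -> R)
  (ha : forall n, (0 < n)%N -> 0 <= a n)
  (hsum : forall N, \sum_(1 <= n < N.+1) a n <= 1) (P : seq nat) M :
  uniq P -> all prime P -> {in P, forall p, (p < M)%N} ->
  \sum_(p <- P) Sp a p <= 1.
Proof.
move=> uP pP PM.
rewrite /Sp -(big_allpairs_dep (h := fun p d => (d * p)%N)).
apply: le_trans (hsum (M * M)%N).
have -> : index_iota 1 (M * M).+1 = iota 1 (M * M) by rewrite /index_iota subSS subn0.
apply: le_sum_sub; last by move=> x; rewrite mem_iota => /andP[x1 _]; apply: ha.
- apply: allpairs_uniq_dep => //; first by move=> p _; exact: iota_uniq.
  move=> [p1 d1] [p2 d2] /allpairsPdep [q1 [e1 [q1P e1i E1]]]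
         /allpairsPdep [q2 [e2 [q2P e2i E2]]] /= E.
  move: E; case: E1 => -> ->; case: E2 => -> -> E.
  have pq1 : prime q1 by move/allP: pP => /(_ _ q1P).
  have pq2 : prime q2 by move/allP: pP => /(_ _ q2P).
  move: e1i e2i; rewrite !mem_iota !add1n (prednK (prime_gt0 pq1)) (prednK (prime_gt0 pq2)) => e1i e2i.
  by case: (@prime_rep q1 q2 e1 e2 pq1 pq2 e1i e2i E) => -> ->.
- exact: iota_uniq.
- move=> m /allpairsPdep [p [d [pin din ->]]].
  have pp : prime p by move/allP: pP => /(_ _ pin).
  move: din; rewrite !mem_iota !add1n (prednK (prime_gt0 pp)) => /andP[d0 dp].
  have pM := PM _ pin.
  nia.
Qed.

Lemma Bsum_le (R : realType) (a : nat -> R)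
  (ha : forall n, (0 < n)%N -> 0 <= a n) n :
  (0 < n)%N -> Bsum a n <= n%:R * Sp a n.
Proof.
move=> n0; rewrite /Bsum /B big_map.
have I : iota 1 n = index_iota 1 n.+1 by rewrite /index_iota subSS subn0.
have -> : n%:R * Sp a n = \sum_(k <- iota 1 n) Sp a n.
  by rewrite I sumr_const_nat subSS subn0 mulr_natl.
rewrite big_seq [X in _ <= X]big_seq; apply: ler_sum => k kin.
rewrite big_map /Sp -big_filter.
have -> : \sum_(j <- [seq j <- iota 1 n | (j * n < k * n)%N]) a (k * n - j * n)%N
   = \sum_(d <- [seq (k - j)%N | j <- [seq j <- iota 1 n | (j * n < k * n)%N]]) a (d * n)%N.
  by rewrite big_map; apply: eq_bigr => j _; rewrite mulnBl.
move: kin; rewrite mem_iota => /andP[k1 kn].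
apply: le_sum_sub.
- rewrite map_inj_in_uniq ?filter_uniq ?iota_uniq //.
  move=> j1 j2; rewrite !mem_filter !ltn_pmul2r // => /andP[l1 _] /andP[l2 _] e.
  lia.
- exact: iota_uniq.
- move=> d /mapP [j]; rewrite mem_filter mem_iota ltn_pmul2r // => /andP[l /andP[j1 jn]] ->.
  rewrite mem_iota; lia.
- move=> d; rewrite mem_iota => /andP[d1 _]; apply: ha; rewrite muln_gt0 d1 n0 //.
Qed.

Theorem corollary6 (R : realType) (a : nat -> R)
  (ha : forall n, (0 < n)%N -> 0 <= a n)
  (hsum : forall N, \sum_(1 <= n < N.+1) a n <= 1) :
  forall eps : R, 0 < eps ->
  forall N : nat, exists n : nat, (N <= n)%N /\ (0 < n)%N /\ Bsum a n < eps.
Proof.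
move=> eps e0 N.
have [K HK] : exists K : nat, 2 / eps < K%:R.
  by exists (Num.truncn (2 / eps)).+1; exact: truncnS_gt.
have [M [NM HM]] := erdos_iter R N K.
case: (boolP (has (fun p => prime p && (Bsum a p < eps)) (index_iota N M))).
  move=> /hasP [p pin /andP[pp lt]]; exists p; split.
    by move: pin; rewrite mem_index_iota => /andP[].
  by split; [exact: prime_gt0 | exact: lt].
move=> /hasPn H; exfalso.
have H1 : eps * \sum_(N <= p < M | prime p) (p%:R)^-1 <= \sum_(N <= p < M | prime p) Sp a p.
  rewrite mulr_sumr big_seq_cond [X in _ <= X]big_seq_cond; apply: ler_sum.
  move=> p /andP[pin pp].
  have p0 : (0 : R) < p%:R by rewrite ltr0n prime_gt0.
  have := H p pin; rewrite pp /= -leNgt => le1.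
  rewrite mulrC ler_pdivrMl; last exact: p0.
  exact: le_trans le1 (@Bsum_le R a ha p (prime_gt0 pp)).
have H2 : \sum_(N <= p < M | prime p) Sp a p <= 1.
  rewrite -big_filter; apply: (@sum_Sp R a ha hsum _ M).
  - by rewrite filter_uniq // iota_uniq.
  - exact: filter_all.
  - by move=> p; rewrite mem_filter mem_index_iota => /andP[_ /andP[]].
have H3 : 2 < K%:R * eps by rewrite -ltr_pdivrMr.
have H4 : eps * (K%:R / 2) <= eps * \sum_(N <= p < M | prime p) (p%:R)^-1.
  by rewrite ler_pM2l.
move: H1 H2 H3 H4.
set s1 := \sum_(N <= p < M | prime p) (p%:R)^-1.
set s2 := \sum_(N <= p < M | prime p) Sp a p.
set Y := eps * s1; set k := (K%:R : R).
have -> : eps * (k / 2) = (k * eps) / 2 by rewrite mulrA [eps * k]mulrC.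
set Z := k * eps.
clearbody Y Z s2; move=> *; lra.
Qed.
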